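(* Let ${\mathbf T}$ be a thinning matrix such that ${\mathbf T}_{n,n}>0$ and ${\mathbf T}_{n,n-1}>0$ for all $n\in\mathbb N$. Let $N$ be a random variable with law $\nu$ on $\mathbb N_0$ such that, if $\nu_{n_0}=0$ for some $n_0$, then $\nu_n=0$ for all $n\ge n_0$. Let ${\mathbf Q}$ be the corresponding condensation matrix. Then for all non-negative functions $g$ on $\mathbb N_0$, $$\mathbb E\Big[g(N)\,\frac{{\mathbf T}_{N,N-1}}{{\mathbf T}_{N-1,N-1}}\Big]=\mathbb E\Big[g(N+1)\,\frac{{\mathbf Q}_{N,N+1}}{{\mathbf Q}_{N,N}}\Big],$$ with the convention that $\frac{{\mathbf T}_{0,-1}}{{\mathbf T}_{-1,-1}}=0$.
   Context: A thinning matrix is a stochastic matrix ${\mathbf T}=({\mathbf T}_{n,k})_{n,k\in\mathbb N_0}$ with ${\mathbf T}_{n,k}=0$ for $k>n$. Let $\nu'=\nu{\mathbf T}$, i.e. $\nu'_k=\sum_n\nu_n{\mathbf T}_{n,k}$. The condensation matrix corresponding to $\nu$ and ${\mathbf T}$ is defined as follows. Let $N_\ast$ have conditional law ${\mathbf T}_{N,\cdot}$ given $N$. Let $\Upsilon$ be a stochastic matrix with $\mathbb E\,g(N_\ast,N-N_\ast)=\sum_{k,l}\nu'_k\Upsilon_{k,l}g(k,l)$ for all non-negative $g$. Then ${\mathbf Q}_{k,n}=\Upsilon_{k,n-k}$ for $k\le n$ and ${\mathbf Q}_{k,n}=0$ for $k>n$. Equivalently, ${\mathbf Q}$ is a stochastic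 matrix satisfying $\nu'_k{\mathbf Q}_{k,n}=\nu_n{\mathbf T}_{n,k}$ for all $k,n$. *)

(* Defs.v *)
(* Laws and matrices on N_0 = nat,
   real-valued over an abstract R : realType; infinite sums of non-negative
   terms are taken in the extended reals \bar R (so expectations may be +oo). *)
From mathcomp Require Import all_boot all_order all_algebra.
From mathcomp Require Import all_classical all_reals all_analysis.
Set Implicit Arguments. Unset Strict Implicit. Unset Printing Implicit Defensive.
Import Order.TTheory GRing.Theory Num.Theory.
Local Open Scope ring_scope.
Local Open Scope ereal_scope.

Definition is_law (R : realType) (nu : nat -> R) : Prop :=
  (forall n, (0 <= nu n)%R) /\ \sum_(n <oo) (nu n)%:E = 1%E.

Definition stochastic (R : realType) (M : nat -> nat -> R) : Prop :=
  (forall n k, (0 <= M n k)%R) /\ (forall n, \sum_(k <oo) (M n k)%:E = 1%E).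

Definition thinning (R : realType) (T : nat -> nat -> R) : Prop :=
  stochastic T /\ (forall n k, (n < k)%N -> T n k = 0%R).

Definition thinned_law (R : realType) (nu : nat -> R) (T : nat -> nat -> R)
  (k : nat) : \bar R := \sum_(n <oo) (nu n * T n k)%:E.

Definition condensation (R : realType) (nu : nat -> R) (T : nat -> nat -> R)
  (Q : nat -> nat -> R) : Prop :=
  stochastic Q /\ (forall k n, (n < k)%N -> Q k n = 0%R) /\
  (forall k n, thinned_law nu T k * (Q k n)%:E = (nu n * T n k)%:E).

Definition Tratio (R : realType) (T : nat -> nat -> R) (n : nat) : R :=
  match n with 0 => 0%R | m.+1 => (T m.+1 m / T m m)%R end.

(* Main.v *)
Require Import Defs.
From mathcomp Require Import all_boot all_order all_algebra.
From mathcomp Require Import all_classical all_reals all_analysis.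
From mathcomp Require Import ring.
Import Order.TTheory GRing.Theory Num.Theory.
Local Open Scope ring_scope.
Local Open Scope ereal_scope.

Lemma shift_series (R : realType) (a : nat -> R) :
  (forall n, (0 <= a n)%R) -> a 0%N = 0%R ->
  \sum_(n <oo) (a n)%:E = \sum_(n <oo) (a n.+1)%:E.
Proof.
move=> a0 a00.
rewrite nneseries_recl //; last by move=> k _; rewrite lee_fin.
rewrite a00 add0e -nneseries_addn; last by move=> i; rewrite lee_fin.
by apply: eq_eseriesr => n _; rewrite addn1.
Qed.

Lemma T00 (R : realType) (T : nat -> nat -> R) : thinning T -> T 0%N 0%N = 1%R.
Proof.
move=> [[T0 Ts] Tz].
have := Ts 0%N.
rewrite nneseries_recl //; last by move=> k _; rewrite lee_fin.
rewrite eseries0; last by move=> i i1 _; rewrite Tz.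
by rewrite adde0 => /eqP; rewrite eqe => /eqP.
Qed.

Theorem mainTheorem2 (R : realType) (T : nat -> nat -> R) (nu : nat -> R)
  (Q : nat -> nat -> R) (g : nat -> R) :
  thinning T ->
  (forall n, (0 < n)%N -> (0 < T n n)%R /\ (0 < T n n.-1)%R) ->
  is_law nu ->
  (forall n0, nu n0 = 0%R -> forall n, (n0 <= n)%N -> nu n = 0%R) ->
  condensation nu T Q ->
  (forall n, (0 <= g n)%R) ->
  \sum_(n <oo) (nu n * (g n * Tratio T n))%:E =
  \sum_(n <oo) (nu n * (g n.+1 * (Q n n.+1 / Q n n)))%:E.
Proof.
move=> hT hTp [nu0 _] hnu [[Q0 _] [_ hQ]] g0.
have T0 : forall n k, (0 <= T n k)%R by case: hT => [[]].
have Tnn : forall n, (0 < T n n)%R.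
  case=> [|n]; first by rewrite T00.
  by case: (hTp n.+1 isT).
rewrite shift_series; last first.
- by rewrite /= !mulr0.
- case=> [|n] /=; first by rewrite !mulr0.
  by rewrite mulr_ge0 // mulr_ge0 // divr_ge0.
apply: eq_eseriesr => n _ /=; congr (_%:E).
have [nu0n|nun] := eqVneq (nu n) 0%R.
  by rewrite (hnu n nu0n n.+1) // nu0n ?leqnSn // !mul0r.
have := hQ n n; have := hQ n n.+1.
case E : (thinned_law nu T n) => [r| |].
- rewrite -!EFinM => /eqP; rewrite eqe => /eqP h1 /eqP; rewrite eqe => /eqP h2.
  have hTn := Tnn n.
  have r0 : r != 0%R.
    apply/eqP => r0; move: h2; rewrite r0 mul0r => /esym /eqP.
    by rewrite mulf_eq0 (negPf nun) (gt_eqF hTn).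
  have q0 : Q n n = (nu n * T n n / r)%R.
    by rewrite -h2 mulrC mulrA mulVf // mul1r.
  have q1 : Q n n.+1 = (nu n.+1 * T n.+1 n / r)%R by rewrite -h1 mulrC mulrA mulVf // mul1r.
  rewrite q0 q1; field.
  by rewrite r0 nun (gt_eqF hTn).
- move=> _ h2; exfalso.
  have [q0|q0] := eqVneq (Q n n) 0%R.
    move: h2; rewrite q0 mule0 => /eqP; rewrite eqe eq_sym mulf_eq0 (negPf nun).
    by rewrite (gt_eqF (Tnn n)).
  have qp : (0 < Q n n)%R by rewrite lt_def q0 Q0.
  by move: h2; rewrite mulyr gtr0_sg // mul1e.
- move=> _ h2; exfalso.
  have [q0|q0] := eqVneq (Q n n) 0%R.
    move: h2; rewrite q0 mule0 => /eqP; rewrite eqe eq_sym mulf_eq0 (negPf nun).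
    by rewrite (gt_eqF (Tnn n)).
  have qp : (0 < Q n n)%R by rewrite lt_def q0 Q0.
  by move: h2; rewrite mulNyr gtr0_sg // mul1e.
Qed.
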